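(* Let $\mathcal M\subset{}^d\mathcal K$ be maximal isotropic. If $n_+(\mathcal M)=0$, then $\dim\ker\Delta(\mathcal M,\underline a)\leq n_0(\mathcal M)$.
   Context: Let $\mathcal G=(V,\mathcal I,\mathcal E,\partial)$ be a finite connected graph with internal edges $\mathcal I$ (intervals $I_i=[0,a_i]$, $a_i>0$) and external edges $\mathcal E$ (half-lines $I_e=[0,\infty)$). $\mathcal H=\bigoplus_jL^2(I_j)$; $\mathcal D$ = $\psi\in\mathcal H$ with $\psi_j,\psi_j'$ absolutely continuous, $\psi_j''\in L^2$. $\mathcal K=\mathbb C^{|\mathcal E|}\oplus\mathbb C^{|\mathcal I|}\oplus\mathbb C^{|\mathcal I|}$, ${}^d\mathcal K=\mathcal K\oplus\mathcal K$. For $\psi\in\mathcal D$: $\underline\psi=(\{\psi_e(0)\},\{\psi_i(0)\},\{\psi_i(a_i)\})$, $\underline\psi'=(\{\psi_e'(0)\},\{\psi_i'(0)\},\{-\psi_i'(a_i)\})$. Maximal isotropic subspaces of ${}^d\mathcal K$ are exactly $\mathcal M(A,B)=\{\chi_1\oplus\chi_2:A\chi_1+B\chi_2=0\}$ with $A,B$ linear on $\mathcal K$, $(A,B)$ of rank $|\mathcal E|+2|\mathcal I|$ and $AB^\dagger$ self-adjoint. $\Delta(\mathcal M,\underline a)$ is the self-adjoint operator $(\Delta\psi)_j=\psi_j''$ on $\{\psi\in\mathcal D:A\underline\psi+B\underline\psi'=0\}$. $n_+(\mathcal M)$, $n_0(\mathcal M)$ are the numbers of positive, resp. zero, eigenvalues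 (with multiplicity) of $AB^\dagger$, independent of the choice of $(A,B)$ with $\mathcal M=\mathcal M(A,B)$. *)

(* Defs.v *)
From HB Require Import structures.
From mathcomp Require Import all_boot all_order all_algebra.
From mathcomp Require Import all_classical all_reals all_analysis.
From mathcomp Require Import complex.
Set Implicit Arguments. Unset Strict Implicit. Unset Printing Implicit Defensive.
Import Order.TTheory GRing.Theory Num.Theory.
Local Open Scope classical_set_scope.
Local Open Scope ring_scope.

Section QuantumGraph.
Variable R : realType.

Notation mu := (@lebesgue_measure R).

(* External edges are indexed by 'I_nE, internal edges by 'I_nI.
   The boundary map: an external edge e is attached at the vertex endE e,
   an internal edge i has initial vertex (endI i).1 and terminal vertex (endI i).2. *)
Definition graph_connected (V : finType) (nI : nat) (endI : 'I_nI -> V * V) : Prop :=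
  forall v w : V,
    connect (fun x y => [exists i : 'I_nI, (endI i == (x, y)) || (endI i == (y, x))]) v w.

Definition edge (nE nI : nat) := ('I_nE + 'I_nI)%type.

Definition edge_interval (nE nI : nat) (a : 'I_nI -> R) (j : edge nE nI) : set R :=
  match j with
  | inl _ => `[0%R, +oo[%classic
  | inr i => `[0%R, a i]%classic
  end.

Definition L2on (I : set R) (f : R -> R) : Prop :=
  measurable_fun I f /\ mu.-integrable I (fun x => ((f x) ^+ 2)%:E).

(* u is absolutely continuous on I with (a.e.) derivative phi, phi is absolutely
   continuous on I with (a.e.) derivative chi, and u, chi are in L^2(I).
   (Absolute continuity is expressed through Lebesgue's characterization:
   u x = u 0 + \int_0^x phi with phi locally integrable.) *)
Definition H2data (I : set R) (u phi chi : R -> R) : Prop :=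
  [/\ forall x, I x -> mu.-integrable `[0%R, x] (EFin \o phi)
                       /\ mu.-integrable `[0%R, x] (EFin \o chi),
      forall x, I x -> u x = u 0 + Rintegral mu `[0%R, x] phi,
      forall x, I x -> phi x = phi 0 + Rintegral mu `[0%R, x] chi,
      L2on I u & L2on I chi].

Definition cH2data (I : set R) (u phi chi : R -> R[i]) : Prop :=
  H2data I (fun x => complex.Re (u x)) (fun x => complex.Re (phi x)) (fun x => complex.Re (chi x))
  /\ H2data I (fun x => complex.Im (u x)) (fun x => complex.Im (phi x)) (fun x => complex.Im (chi x)).

Section Boundary.
Variables (nE nI : nat) (a : 'I_nI -> R).

Definition bval (psi : edge nE nI -> R -> R[i]) : 'cV[R[i]]_(nE + nI + nI) :=
  col_mx (col_mx (\col_(e < nE) psi (inl e) 0) (\col_(i < nI) psi (inr i) 0))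
         (\col_(i < nI) psi (inr i) (a i)).

(* underline psi' : boundary derivatives (outward sign at a_i) *)
Definition bder (phi : edge nE nI -> R -> R[i]) : 'cV[R[i]]_(nE + nI + nI) :=
  col_mx (col_mx (\col_(e < nE) phi (inl e) 0) (\col_(i < nI) phi (inr i) 0))
         (\col_(i < nI) - phi (inr i) (a i)).

Definition in_kernel (A B : 'M[R[i]]_(nE + nI + nI)) (psi : edge nE nI -> R -> R[i]) : Prop :=
  exists phi chi : edge nE nI -> R -> R[i],
    [/\ forall j, cH2data (edge_interval a j) (psi j) (phi j) (chi j),
        A *m bval psi + B *m bder phi = 0
      & forall j, {ae mu, forall x, edge_interval a j x -> chi j x = 0}].

Definition lin_indep_H (m : nat) (Psi : 'I_m -> edge nE nI -> R -> R[i]) : Prop :=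
  forall c : 'I_m -> R[i],
    (forall j, {ae mu, forall x, edge_interval a j x -> \sum_(l < m) c l * Psi l j x = 0}) ->
    forall l, c l = 0.

Definition ker_dim_le (A B : 'M[R[i]]_(nE + nI + nI)) (k : nat) : Prop :=
  forall (m : nat) (Psi : 'I_m -> edge nE nI -> R -> R[i]),
    (forall l, in_kernel A B (Psi l)) -> lin_indep_H Psi -> (m <= k)%N.

End Boundary.

Definition adjmx (n : nat) (M : 'M[R[i]]_n) : 'M[R[i]]_n := map_mx Num.conj M^T.

Definition eigenvalues (n : nat) (M : 'M[R[i]]_n) : seq R[i] :=
  sval (closed_field_poly_normal (char_poly M)).

Definition n_plus (n : nat) (M : 'M[R[i]]_n) : nat := count (fun z => 0 < z) (eigenvalues M).
Definition n_zero (n : nat) (M : 'M[R[i]]_n) : nat := count (fun z => z == 0) (eigenvalues M).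

End QuantumGraph.

(* Main.v *)
Require Import Defs.
From HB Require Import structures.
From mathcomp Require Import all_boot all_order all_algebra.
From mathcomp Require Import all_classical all_reals all_analysis.
From mathcomp Require Import complex.
From mathcomp Require Import ring lra.
Set Implicit Arguments. Unset Strict Implicit. Unset Printing Implicit Defensive.
Import Order.TTheory GRing.Theory Num.Theory.
Local Open Scope ring_scope.

Section LA.
Variable C : numClosedFieldType.

Definition adj m n (M : 'M[C]_(m, n)) : 'M[C]_(n, m) := map_mx Num.conj M^T.

Lemma adjM m n p (X : 'M[C]_(m, n)) (Y : 'M[C]_(n, p)) : adj (X *m Y) = adj Y *m adj X.
Proof. by rewrite /adj trmx_mul map_mxM. Qed.

Lemma adjK m n (X : 'M[C]_(m, n)) : adj (adj X) = X.
Proof. by apply/matrixP => i j; rewrite !mxE conjCK. Qed.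

Lemma adjD m n (X Y : 'M[C]_(m, n)) : adj (X + Y) = adj X + adj Y.
Proof. by apply/matrixP => i j; rewrite !mxE rmorphD. Qed.

Lemma char_poly_similar n (P A : 'M[C]_n) : P \in unitmx ->
  char_poly (invmx P *m A *m P) = char_poly A.
Proof.
move=> uP; rewrite /char_poly /char_poly_mx.
set f := (@polyC C).
have e1 : map_mx f (invmx P) *m map_mx f P = 1%:M.
  by rewrite -map_mxM mulVmx // map_mx1.
have Xe : ('X%:M : 'M[{poly C}]_n) = map_mx f (invmx P) *m 'X%:M *m map_mx f P.
  by rewrite -mulmxA -scalar_mxC mulmxA e1 mul1mx.
rewrite !map_mxM {1}Xe -mulmxBl -mulmxBr !det_mulmx mulrC mulrA -det_mulmx.
by rewrite -map_mxM mulmxV // map_mx1 det1 mul1r.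
Qed.


Lemma spec_facts n (M : 'M[C]_n) (s : seq C) :
  adj M = M ->
  char_poly M = lead_coef (char_poly M) *: \prod_(z <- s) ('X - z%:P) ->
  count (fun z => 0 < z) s = 0%N ->
  exists (P : 'M[C]_n) (d : 'rV[C]_n),
    [/\ adj P *m P = 1%:M, M = adj P *m diag_mx d *m P,
        forall i, d 0 i <= 0 &
        count (fun z => z == 0) s = #|[pred i | d 0 i == 0]| ].
Proof.
move=> hM cM cp.
have herm : M \is hermsymmx.
  by apply/is_hermitianmxP; rewrite expr0 scale1r; exact: esym hM.
set P := spectralmx M; set d := spectral_diag M.
have uP : P \is unitarymx := spectral_unitarymx M.
have uP' : P \in unitmx := unitarymx_unit uP.
have eM : M = invmx P *m diag_mx d *m P.
  exact/orthomx_spectralP/hermitian_normalmx.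
have iP : invmx P = adj P by rewrite invmx_unitary.
have rd := hermitian_spectral_diag_real herm.
have cD : char_poly M = \prod_(z <- [seq d 0 i | i <- enum 'I_n]) ('X - z%:P).
  rewrite eM char_poly_similar // char_poly_trig ?diag_mx_is_trig //.
  rewrite big_map big_enum /=; apply: eq_bigr => i _; rewrite !mxE eqxx mulr1n //.
have ps : perm_eq s [seq d 0 i | i <- enum 'I_n].
  apply: prod_XsubC_eq; rewrite -cD [in RHS]cM.
  by rewrite (monicP (char_poly_monic M)) scale1r.
exists P, d; split.
- by rewrite -iP mulVmx.
- by rewrite -iP.
- move=> i; have ri : d 0 i \is Num.real by exact: (mxOverP rd).
  rewrite real_leNgt ?real0 //; apply/negP => di.
  move: cp; rewrite (permP ps) => /eqP; rewrite eqn0Ngt -has_count => /hasPn /(_ (d 0 i)).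
  rewrite di => /(_ _) /negP; apply => //; apply: map_f; rewrite mem_enum //.
- rewrite (permP ps) count_map cardE /enum_mem size_filter.
  by rewrite (@eq_filter _ _ predT) // filter_predT; apply: eq_count.
Qed.

Lemma adjN m n (X : 'M[C]_(m, n)) : adj (- X) = - adj X.
Proof. by apply/matrixP => i j; rewrite !mxE rmorphN. Qed.

Lemma rank_adj m n (X : 'M[C]_(m, n)) : \rank (adj X) = \rank X.
Proof. by rewrite /adj mxrank_map mxrank_tr. Qed.

Lemma exw n (A B : 'M[C]_n) (x y : 'cV[C]_n) :
  \rank (row_mx A B) = n -> adj (A *m adj B) = A *m adj B ->
  A *m x + B *m y = 0 ->
  exists w : 'cV[C]_n, x = adj B *m w /\ y = - (adj A *m w).
Proof.
move=> rk hM e.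
set K := (row_mx A B)^T.
set Y := col_mx (adj B) (- adj A).
set X := col_mx x y.
have sX : (X^T <= kermx K)%MS.
  by apply/sub_kermxP; rewrite /K -trmx_mul mul_row_col e trmx0.
have sY : (Y^T <= kermx K)%MS.
  apply/sub_kermxP; rewrite /K -trmx_mul mul_row_col mulmxN.
  have -> : B *m adj A = A *m adj B by rewrite -hM adjM adjK.
  by rewrite subrr trmx0.
have rK : \rank (kermx K) = n by rewrite mxrank_ker mxrank_tr rk addnK.
have rY : \rank Y^T = n.
  rewrite mxrank_tr.
  have -> : Y = adj (row_mx B (- A)).
    by rewrite /adj tr_row_mx map_col_mx -/(adj B) -/(adj (-A)) adjN.
  rewrite rank_adj.
  set J : 'M[C]_(n + n) := block_mx 0 (- 1%:M) 1%:M 0.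
  have -> : row_mx B (- A) = row_mx A B *m J.
    by rewrite mul_row_block mulmxN !mulmx0 !mulmx1 addr0 add0r.
  rewrite (@mxrankMfree _ _ _ _ (row_mx A B) J) // ; apply/row_freeP; exists (- J).
  rewrite mulmxN /J mulmx_block !mulmx0 !mul0mx !mulmx1 !mulmxN !mulmx1 !addr0 !add0r.
  by rewrite [RHS]scalar_mx_block opp_block_mx !opprK oppr0.
have sKY : (kermx K <= Y^T)%MS.
  by rewrite -(mxrank_leqif_sup sY).2 rY rK.
have /submxP [D eD] := submx_trans sX sKY.
exists D^T.
have : X = Y *m D^T by rewrite -[X]trmxK eD trmx_mul trmxK.
rewrite /X /Y mul_col_mx => /eq_col_mx [-> ->].
by rewrite mulNmx.
Qed.

Lemma count_indep n m (Z : pred 'I_n) (v : 'I_m -> 'cV[C]_n) :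
  (forall l i, ~~ Z i -> v l i 0 = 0) ->
  (forall c : 'I_m -> C, \sum_l c l *: v l = 0 -> forall l, c l = 0) ->
  (m <= #|Z|)%N.
Proof.
move=> vZ ind.
pose V : 'M[C]_(m, n) := \matrix_(l, i) v l i 0.
have fV : row_free V.
  rewrite -kermx_eq0; apply/eqP/row_matrixP => k; rewrite row0.
  set r := row k (kermx V).
  have rV : r *m V = 0 by rewrite /r -row_mul mulmx_ker row0.
  have hs : \sum_l r 0 l *: v l = 0.
    apply/matrixP => i j; rewrite ord1 {j}.
    have := congr1 (fun M : 'M[C]_(1, n) => M 0 i) rV; rewrite !mxE => h.
    rewrite summxE; apply: (etrans _ h).
    by apply: eq_bigr => l _; rewrite !mxE.
  by apply/rowP => l; rewrite [RHS]mxE; exact: ind hs l.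
pose W : 'M[C]_(m, #|Z|) := \matrix_(l, k) V l (enum_val k).
pose S : 'M[C]_(#|Z|, n) := \matrix_(k, j) ((enum_val k == j)%:R).
have eV : V = W *m S.
  apply/matrixP => l j; rewrite !mxE.
  case Zj : (Z j).
    have Zj' : j \in Z by [].
    rewrite (bigD1 (enum_rank_in Zj' j)) //= !mxE enum_rankK_in // eqxx mulr1.
    rewrite big1 ?addr0 // => k hk; rewrite !mxE.
    case: eqP => [e|]; last by rewrite mulr0.
    by have := enum_valK_in Zj' k; rewrite e => ek; rewrite ek eqxx in hk.
  rewrite vZ ?Zj // big1 // => k _; rewrite !mxE.
  case: eqP => [e|]; last by rewrite mulr0.
  by have := enum_valP k; rewrite e unfold_in /= Zj.
rewrite -(eqP fV) eV; apply: leq_trans (mxrankM_maxl _ _) (rank_leq_col _).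
Qed.

Lemma quad_diag n (v : 'cV[C]_n) (d : 'rV[C]_n) :
  (adj v *m diag_mx d *m v) 0 0 = \sum_i d 0 i * (v i 0 * Num.conj (v i 0)).
Proof.
rewrite mxE; apply: eq_bigr => i _; rewrite mul_mx_diag !mxE.
by rewrite [_^* * d 0 i]mulrC -mulrA [_^* * _]mulrC.
Qed.

Lemma LA_core n m (A B : 'M[C]_n) (s : seq C) (x y : 'I_m -> 'cV[C]_n) :
  \rank (row_mx A B) = n -> adj (A *m adj B) = A *m adj B ->
  char_poly (A *m adj B) =
    lead_coef (char_poly (A *m adj B)) *: \prod_(z <- s) ('X - z%:P) ->
  count (fun z => 0 < z) s = 0%N ->
  (forall l, A *m x l + B *m y l = 0) ->
  (forall l, (adj (x l) *m y l) 0 0 <= 0) ->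
  (forall c : 'I_m -> C, \sum_l c l *: x l = 0 -> forall l, c l = 0) ->
  (m <= count (fun z : C => z == 0%R) s)%N.
Proof.
move=> rk hM cM cp e ip ind.
have [P [d [uP eM dle cz]]] := spec_facts hM cM cp.
rewrite cz.
have [w hw] := fin_all_exists (fun l => exw rk hM (e l)).
apply: (@count_indep n m [pred i | d 0 i == 0] (fun l => P *m w l)).
- move=> l i /= di.
  set v := P *m w l.
  have eq1 : (adj (x l) *m y l) 0 0 = - (adj v *m diag_mx d *m v) 0 0.
    rewrite (hw l).1 (hw l).2 mulmxN adjM adjK.
    have -> : adj (w l) *m B *m (adj A *m w l) = adj (w l) *m (A *m adj B) *m w l.
      by rewrite -hM adjM adjK !mulmxA.
    by rewrite eM /v adjM !mulmxA mxE.
  have tle : forall j, d 0 j * (v j 0 * Num.conj (v j 0)) <= 0.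
    by move=> j; rewrite mulr_le0_ge0 // mul_conjC_ge0.
  have s0 : \sum_j - (d 0 j * (v j 0 * Num.conj (v j 0))) = 0.
    apply/eqP; rewrite eq_le sumr_ge0 ?andbT; last by move=> j _; rewrite oppr_ge0.
    rewrite sumrN oppr_le0 -quad_diag -oppr_le0 -eq1; exact: ip.
  have hpos : forall j, true -> 0 <= - (d 0 j * (v j 0 * Num.conj (v j 0))).
    by move=> j _; rewrite oppr_ge0.
  have := (@psumr_eq0P _ _ _ _ hpos s0 i isT).
  move/eqP; rewrite oppr_eq0 mulf_eq0 (negbTE di) /= mul_conjC_eq0 => /eqP.
  by [].
- move=> c hc; apply: ind.
  have -> : \sum_l c l *: x l = (adj B *m adj P) *m \sum_l c l *: (P *m w l).
    rewrite mulmx_sumr; apply: eq_bigr => l _.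
    by rewrite -scalemxAr mulmxA -(mulmxA (adj B)) uP mulmx1 (hw l).1.
  by rewrite hc mulmx0.
Qed.
End LA.

Section AN.
Local Open Scope classical_set_scope.
Local Open Scope ring_scope.
Variable R : realType.
Notation mu := (@lebesgue_measure R).

Lemma RL (I : set R) (u phi chi : R -> R) :
  (forall x, I x -> 0 <= x) -> (forall x y, I x -> 0 <= y -> y <= x -> I y) ->
  H2data I u phi chi -> {ae mu, forall x, I x -> chi x = 0} ->
  forall x, I x -> phi x = phi 0 /\ u x = u 0 + phi 0 * x.
Proof.
move=> I0 Iconv [hint hu hphi _ _] hae.
have sub x : I x -> `[0, x] `<=` I.
  move=> Ix y /=; rewrite in_itv /= => /andP[h1 h2]; exact: Iconv Ix h1 h2.
have mphi x : I x -> phi x = phi 0.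
  move=> Ix; rewrite (hphi x Ix).
  suff -> : Rintegral mu `[0, x] chi = 0 by rewrite addr0.
  rewrite /Rintegral (ae_eq_integral (cst 0%E)) ?integral0 //.

  - exact: measurable_funS (measurable_int _ (hint x Ix).2).
  - rewrite /ae_eq; near=> y => Dy; rewrite /= (near hae y) //; exact: sub x Ix y Dy.
move=> x Ix; split; first exact: mphi.
rewrite (hu x Ix); congr (_ + _).
rewrite (@eq_Rintegral _ _ _ _ _ (fun _ => phi 0)); last first.
  by move=> y /set_mem Dy; exact: mphi (sub x Ix y Dy).
rewrite Rintegral_cst //.
have := @lebesgue_measure_itv R `[0, x]; simpl => h; rewrite h.
case: ifPn => hx /=; first by rewrite oppr0 /= addr0.
have -> : x = 0.
  by apply/le_anti; rewrite I0 // andbT; move: hx; rewrite lte_fin -leNgt.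
by rewrite mulr0.
Unshelve. all: by end_near.
Qed.


Lemma noL2 (f : R -> R) (N eps : R) : 0 <= N -> 0 < eps ->
  (forall x, N <= x -> eps <= f x ^+ 2) ->
  ~ mu.-integrable `[0, +oo[ (fun x => ((f x) ^+ 2)%:E).
Proof.
move=> N0 e0 hf hi.
have sub : `[N, +oo[ `<=` `[0, +oo[.
  move=> y /=; rewrite !in_itv /= !andbT => h; exact: le_trans h.
have hi2 : mu.-integrable `[N, +oo[ (fun x => ((f x) ^+ 2)%:E).
  apply: integrableS hi => //.
move/integrableP : hi2 => [mf fin].
have e : (\int[mu]_(x in `[N, +oo[) `|(f x ^+ 2)%:E| =
          \int[mu]_(x in `[N, +oo[) (f x ^+ 2)%:E)%E.
  by apply: eq_integral => x _; rewrite gee0_abs // lee_fin sqr_ge0.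
rewrite e in fin.
have : (\int[mu]_(x in `[N, +oo[) (cst eps%:E) x <=
        \int[mu]_(x in `[N, +oo[) (f x ^+ 2)%:E)%E.
  apply: ge0_le_integral => //.
  - by move=> x hx; rewrite lee_fin ltW.
  - move=> x /=; rewrite in_itv /= andbT => hx.
    by rewrite lee_fin hf.
rewrite integral_cst //.
have := @lebesgue_measure_itv R `[N, +oo[; simpl => h; rewrite h /=.
rewrite ltry /= => H.
move: fin; rewrite ltNge => /negP; apply.
by move: H; rewrite addye // gt0_muley ?lte_fin.
Qed.

Lemma RLinf (f : R -> R) (u0 c : R) : L2on `[0, +oo[ f ->
  (forall x, 0 <= x -> f x = u0 + c * x) -> u0 = 0 /\ c = 0.
Proof.
move=> [_ hi] hf.
have [c0|c0] := eqVneq c 0.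
  split => //; apply/eqP; apply/negPn/negP => u0n.
  apply: (@noL2 f 0 (u0 ^+ 2)) => //.
  - by rewrite lt_neqAle sqr_ge0 andbT eq_sym sqrf_eq0.
  - by move=> x hx; rewrite hf // c0 mul0r addr0.
exfalso.
have c2 : 0 < c ^+ 2 by rewrite exprn_even_gt0.
pose N := 1 + 2 * (u0 ^+ 2 + 1) / c ^+ 2.
have N1 : 1 <= N.
  rewrite lerDl; apply: divr_ge0; last exact: ltW.
  by apply: mulr_ge0 => //; apply: addr_ge0 => //; exact: sqr_ge0.
have cN : c ^+ 2 * N >= 2 * (u0 ^+ 2 + 1).
  have e : c ^+ 2 * (2 * (u0 ^+ 2 + 1) / c ^+ 2) = 2 * (u0 ^+ 2 + 1).
    by field.
  by rewrite /N [leRHS]mulrDr e mulr1 lerDr ltW.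
apply: (@noL2 f N 1) => //.
- by apply: le_trans N1.
- move=> x hx /=.
  rewrite hf; last by apply: le_trans hx; apply: le_trans N1.
  have x1 : 1 <= x by apply: le_trans hx.
  have h1 : c ^+ 2 * x >= 2 * (u0 ^+ 2 + 1).
    by apply: le_trans cN _; rewrite ler_pM2l.
  have h2 : x <= x ^+ 2 by rewrite expr2 ler_peMl // (le_trans _ x1).
  have h3 : c ^+ 2 * x ^+ 2 >= 2 * (u0 ^+ 2 + 1).
    by apply: le_trans h1 _; rewrite ler_pM2l.
  have h4 : 0 <= (c * x + 2 * u0) ^+ 2 by rewrite sqr_ge0.
  rewrite -subr_ge0.
  have e : (u0 + c * x) ^+ 2 - 1 =
     ((c * x + 2 * u0) ^+ 2 + (c ^+ 2 * x ^+ 2 - 2 * (u0 ^+ 2 + 1))) / 2.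
    by field.
  rewrite e divr_ge0 // addr_ge0 // subr_ge0 //.
Qed.

Lemma ae_impl (P Q : R -> Prop) : (forall x, P x -> Q x) ->
  {ae mu, forall x, P x} -> {ae mu, forall x, Q x}.
Proof.
move=> PQ [N [mN N0 sN]]; exists N; split => // y /= nQ.
by apply: sN => /= hP; exact: nQ (PQ _ hP).
Qed.

Local Open Scope complex_scope.
Lemma CL (I : set R) (psi phi chi : R -> R[i]) :
  (forall x, I x -> 0 <= x) -> (forall x y, I x -> 0 <= y -> y <= x -> I y) ->
  cH2data I psi phi chi -> {ae mu, forall x, I x -> chi x = 0} ->
  forall x, I x -> phi x = phi 0 /\ psi x = psi 0 + phi 0 * x%:C.
Proof.
move=> I0 Iconv [hre him] hae.
have haeRe : {ae mu, forall x, I x -> complex.Re (chi x) = 0}.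
  by apply: ae_impl hae => y h Iy; rewrite h.
have haeIm : {ae mu, forall x, I x -> complex.Im (chi x) = 0}.
  by apply: ae_impl hae => y h Iy; rewrite h.
move=> x Ix.
have [a1 a2] := RL I0 Iconv hre haeRe Ix.
have [b1 b2] := RL I0 Iconv him haeIm Ix.
split.
  by move: a1 b1; case: (phi x) => p q; case: (phi 0) => p' q' /= -> ->.
move: a2 b2; case: (psi x) => p q; case: (psi 0) => p' q'; case: (phi 0) => r r' /= -> ->.
rewrite -[(_ +i* _) * (_ +i* _)]/(_ +i* _) -[(_ +i* _) + (_ +i* _)]/(_ +i* _).
by rewrite !mulr0 subr0 add0r [r' * x]mulrC.
Qed.

Lemma cplx_eq0 (z : R[i]) : complex.Re z = 0 -> complex.Im z = 0 -> z = 0.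
Proof. by case: z => p q /= -> ->. Qed.

Lemma Re_lin (p q : R[i]) (x : R) :
  complex.Re (p + q * x%:C) = complex.Re p + complex.Re q * x.
Proof.
case: p => p1 p2; case: q => q1 q2 /=.
by rewrite mulr0 subr0.
Qed.

Lemma Im_lin (p q : R[i]) (x : R) :
  complex.Im (p + q * x%:C) = complex.Im p + complex.Im q * x.
Proof.
case: p => p1 p2; case: q => q1 q2 /=.
by rewrite mulr0 add0r.
Qed.

Lemma KL (nE nI : nat) (a : 'I_nI -> R) (A B : 'M[R[i]]_(nE + nI + nI))
    (psi : edge nE nI -> R -> R[i]) :
  in_kernel a A B psi -> exists phi : edge nE nI -> R -> R[i],
  [/\ A *m bval a psi + B *m bder a phi = 0,
      forall e x, 0 <= x -> psi (inl e) x = 0,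
      forall e, phi (inl e) 0 = 0,
      forall i, 0 <= a i -> phi (inr i) (a i) = phi (inr i) 0 &
      forall i x, 0 <= x <= a i -> psi (inr i) x = psi (inr i) 0 + phi (inr i) 0 * x%:C].
Proof.
case=> phi [chi [hd hb hae]]; exists phi.
have extI (e : 'I_nE) x : edge_interval a (inl e : edge nE nI) x <-> 0 <= x.
  by rewrite /= in_itv /= andbT.
have intI (i : 'I_nI) x : edge_interval a (inr i : edge nE nI) x <-> 0 <= x <= a i.
  by rewrite /= in_itv /=.
have CLe (e : 'I_nE) x : 0 <= x -> phi (inl e) x = phi (inl e) 0 /\
    psi (inl e) x = psi (inl e) 0 + phi (inl e) 0 * x%:C.
  move=> x0; apply: (CL _ _ (hd (inl e)) (hae (inl e))); last exact/extI.
  - by move=> y /extI.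
  - by move=> y z _ /extI.
have CLi (i : 'I_nI) x : 0 <= x <= a i -> phi (inr i) x = phi (inr i) 0 /\
    psi (inr i) x = psi (inr i) 0 + phi (inr i) 0 * x%:C.
  move=> x0; apply: (CL _ _ (hd (inr i)) (hae (inr i))); last exact/intI.
  - by move=> y /intI /andP[].
  - move=> y z /intI /andP[_ ya] z0 zy; apply/intI; rewrite z0 /=.
    exact: le_trans zy ya.
have ext0 (e : 'I_nE) : psi (inl e) 0 = 0 /\ phi (inl e) 0 = 0.
  have [[_ _ _ L2re _] [_ _ _ L2im _]] := hd (inl e).
  have [h1 h2] := @RLinf _ (complex.Re (psi (inl e) 0)) (complex.Re (phi (inl e) 0)) L2re
    (fun x hx => etrans (congr1 (@complex.Re R) (CLe e x hx).2) (Re_lin _ _ _)).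
  have [h3 h4] := @RLinf _ (complex.Im (psi (inl e) 0)) (complex.Im (phi (inl e) 0)) L2im
    (fun x hx => etrans (congr1 (@complex.Im R) (CLe e x hx).2) (Im_lin _ _ _)).
  by split; apply: cplx_eq0.
split => //.
- move=> e x x0; rewrite (CLe e x x0).2 (ext0 e).1 (ext0 e).2.
  by rewrite mul0r addr0.
- by move=> e; exact: (ext0 e).2.
- by move=> i ai; have [] := CLi i (a i); rewrite ?ai ?lexx.
- by move=> i x hx; apply: (CLi i x hx).2.
Qed.

End AN.

Local Open Scope ring_scope.

Local Open Scope complex_scope.
Section Entries.
Variables (R : realType) (nE nI : nat) (a : 'I_nI -> R) (psi : edge nE nI -> R -> R[i]).
Lemma bvalE1 e : bval a psi (lshift nI (lshift nI e)) 0 = psi (inl e) 0.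
Proof. by rewrite /bval col_mxEu col_mxEu mxE. Qed.
Lemma bvalE2 i : bval a psi (lshift nI (rshift nE i)) 0 = psi (inr i) 0.
Proof. by rewrite /bval col_mxEu col_mxEd mxE. Qed.
Lemma bvalE3 i : bval a psi (rshift (nE + nI) i) 0 = psi (inr i) (a i).
Proof. by rewrite /bval col_mxEd mxE. Qed.
Lemma bderE1 e : bder a psi (lshift nI (lshift nI e)) 0 = psi (inl e) 0.
Proof. by rewrite /bder col_mxEu col_mxEu mxE. Qed.
Lemma bderE2 i : bder a psi (lshift nI (rshift nE i)) 0 = psi (inr i) 0.
Proof. by rewrite /bder col_mxEu col_mxEd mxE. Qed.
Lemma bderE3 i : bder a psi (rshift (nE + nI) i) 0 = - psi (inr i) (a i).
Proof. by rewrite /bder col_mxEd mxE. Qed.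
End Entries.

Lemma adjE (C : numClosedFieldType) n (M : 'cV[C]_n) k : adj M 0 k = Num.conj (M k 0).
Proof. by rewrite !mxE. Qed.

Lemma ip_bval (R : realType) nE nI (a : 'I_nI -> R) (psi phi : edge nE nI -> R -> R[i]) :
  (forall i, 0 < a i) ->
  (forall e, psi (inl e) 0 = 0) ->
  (forall i, phi (inr i) (a i) = phi (inr i) 0) ->
  (forall i, psi (inr i) (a i) = psi (inr i) 0 + phi (inr i) 0 * (a i)%:C) ->
  (adj (bval a psi) *m bder a phi) 0 0 <= 0.
Proof.
move=> ap h0 hpa hpsi.
rewrite mxE big_split_ord big_split_ord /=.
rewrite big1 ?add0r; last first.
  by move=> e _; rewrite adjE bvalE1 h0 rmorph0 mul0r.
rewrite -big_split /= -oppr_ge0 -sumrN; apply: sumr_ge0 => i _.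
rewrite !adjE bvalE2 bvalE3 bderE2 bderE3 (hpa i) (hpsi i).
have a0 : 0 <= (a i)%:C by rewrite ler0c ltW.
have ca : Num.conj ((a i)%:C) = (a i)%:C by rewrite conj_Creal // ger0_real.
set al := psi (inr i) 0; set be := phi (inr i) 0; set ac := (a i)%:C.
have -> : - (Num.conj al * be + Num.conj (al + be * ac) * - be) =
          ac * (be * Num.conj be).
  rewrite rmorphD rmorphM /= ca; ring.
by rewrite mulr_ge0 // mul_conjC_ge0.
Qed.

Theorem proposition3p9 (R : realType) (V : finType) (nE nI : nat)
    (endE : 'I_nE -> V) (endI : 'I_nI -> V * V) (a : 'I_nI -> R)
    (A B : 'M[R[i]]_(nE + nI + nI)) :
  graph_connected endI ->
  (forall i, 0 < a i) ->
  \rank (row_mx A B) = (nE + nI + nI)%N ->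
  adjmx (A *m adjmx B) = A *m adjmx B ->
  n_plus (A *m adjmx B) = 0%N ->
  ker_dim_le a A B (n_zero (A *m adjmx B)).
Proof.
move=> _ apos rk herm np m Psi hker hind.
have [phi hphi] := fin_all_exists (fun l => KL (hker l)).
apply: (@LA_core _ _ m A B (eigenvalues (A *m adjmx B))
          (fun l => bval a (Psi l)) (fun l => bder a (phi l))) => //.
- exact: (svalP (closed_field_poly_normal _)).
- by move=> l; have [] := hphi l.
- move=> l; have [hb he0 hp0 hpa hpi] := hphi l.
  apply: ip_bval => //.
  + by move=> e; apply: he0.
  + by move=> i; apply: hpa; apply: ltW.
  + by move=> i; apply: hpi; rewrite lexx ltW.
- move=> c hc; apply: hind => j; apply: aeW => x.
  case: j => [e|i] /= hx.
    rewrite big1 // => l _; have [_ he0 _ _ _] := hphi l.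
    by rewrite he0 ?mulr0 //; move: hx; rewrite in_itv /= andbT.
  have hx' : 0 <= x <= a i by move: hx; rewrite in_itv.
  have eA : \sum_l c l * Psi l (inr i) 0 = 0.
    have := congr1 (fun M : 'cV_(nE + nI + nI) => M (lshift nI (rshift nE i)) 0) hc.
    rewrite summxE [RHS]mxE => h; apply: etrans _ h.
    by apply: eq_bigr => l _; rewrite mxE bvalE2.
  have eA' : \sum_l c l * Psi l (inr i) (a i) = 0.
    have := congr1 (fun M : 'cV_(nE + nI + nI) => M (rshift (nE + nI) i) 0) hc.
    rewrite summxE [RHS]mxE => h; apply: etrans _ h.
    by apply: eq_bigr => l _; rewrite mxE bvalE3.
  have ac0 : (0 : R[i]) < (a i)%:C by rewrite ltcE /= eqxx apos.
  have eB : \sum_l c l * phi l (inr i) 0 = 0.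
    have : \sum_l c l * Psi l (inr i) (a i) =
      \sum_l c l * Psi l (inr i) 0 + (\sum_l c l * phi l (inr i) 0) * (a i)%:C.
      rewrite mulr_suml -big_split; apply: eq_bigr => l _.
      have [_ _ _ _ hpi] := hphi l.
      by rewrite hpi ?lexx ?ltW // /= mulrDr mulrA.
    rewrite eA' eA add0r => /esym /eqP; rewrite mulf_eq0 (gt_eqF ac0) orbF.
    by move/eqP.
  have -> : \sum_l c l * Psi l (inr i) x =
      \sum_l c l * Psi l (inr i) 0 + (\sum_l c l * phi l (inr i) 0) * x%:C.
    rewrite mulr_suml -big_split; apply: eq_bigr => l _.
    have [_ _ _ _ hpi] := hphi l.
    by rewrite hpi // /= mulrDr mulrA.
  by rewrite eA eB mul0r addr0.
Qed.
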